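(* Let \(S\) be an inverse semigroup with zero and unit. The arrow space of the groupoid \(\mathcal G(S)\) is locally quasi-compact and sober.
   Context: \(E=E(S)\) is the idempotent semilattice. A character on \(E\) is a map \(\varphi\colon E\to\{0,1\}\) with \(\varphi(0)=0\), \(\varphi(1)=1\), \(\varphi(ef)=\varphi(e)\varphi(f)\). \(\hat E\) is the set of characters with the topology generated by \(U_e=\{\varphi:\varphi(e)=1\}\). \(S\) acts on \(\hat E\) by \(s\cdot\varphi(e)=\varphi(s^*es)\) for \(\varphi\in U_{s^*s}\). \(\mathcal G(S)\) has object space \(\hat E\). Its arrows are classes \([s,\varphi]\) (\(s\in S\), \(\varphi\in U_{s^*s}\)), with \((s,\varphi)\sim(t,\psi)\) iff \(\varphi=\psi\) and \(se=te\) for some \(e\in E\) with \(\varphi(e)=1\). The structure maps are \(\mathrm s[s,\varphi]=\varphi\), \(\mathrm r[s,\varphi]=s\cdot\varphi\), \([s,t\cdot\psi][t,\psi]=[st,\psi]\). The arrow topology is generated by the sets \(\{[s,\varphi]:\varphi\in U\}\), \(U\subseteq U_{s^*s}\) open. A space is sober if every non-empty irreducible closed subset is the closure of a unique point. A closed set \(A\) is irreducible if \(A=A_1\cup A_2\) with \(A_i\) closed forces \(A_1=A\) or \(A_2=A\). *)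

(* Defs.v *)
From Stdlib Require Import List.
Set Implicit Arguments.

(* An inverse semigroup is a semigroup in which every s has an element s*
   with s s* s = s and s* s s* = s*, and idempotents commute; then s* is
   the unique inverse of s. *)
Record InvSemigroup0 := {
  car :> Type;
  mul : car -> car -> car;
  star : car -> car;
  zero : car;
  one : car;
  mulA : forall x y z, mul x (mul y z) = mul (mul x y) z;
  mul_star_l : forall s, mul (mul s (star s)) s = s;
  mul_star_r : forall s, mul (mul (star s) s) (star s) = star s;
  idem_comm : forall e f, mul e e = e -> mul f f = f -> mul e f = mul f e;
  mul0s : forall s, mul zero s = zero;
  muls0 : forall s, mul s zero = zero;
  mul1s : forall s, mul one s = s;
  muls1 : forall s, mul s one = s
}.

Section Germs.
Variable S : InvSemigroup0.

Definition idem (e : S) : Prop := mul S e e = e.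

(** Characters on E(S).  A character phi : E -> {0,1} is encoded by the
    predicate on S that agrees with phi on E and is false outside E
    (a bijective encoding). *)
Definition is_character (phi : S -> Prop) : Prop :=
  (forall s, phi s -> idem s) /\
  ~ phi (zero S) /\
  phi (one S) /\
  (forall e f, idem e -> idem f -> (phi (mul S e f) <-> phi e /\ phi f)).

Record character := { chf :> S -> Prop; chf_char : is_character chf }.

Definition U_ (e : S) : character -> Prop := fun phi => phi e.

Definition act_fun (s : S) (phi : character) : S -> Prop :=
  fun e => idem e /\ phi (mul S (mul S (star S s) e) s).

Definition in_dom (p : S * character) : Prop :=
  (snd p) (mul S (star S (fst p)) (fst p)).

Definition germ_rel (p q : S * character) : Prop :=
  in_dom p /\ in_dom q /\ snd p = snd q /\
  exists e, idem e /\ (snd p) e /\ mul S (fst p) e = mul S (fst q) e.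

Record arrow := {
  arr_set : S * character -> Prop;
  arr_cls : exists p, in_dom p /\ forall q, arr_set q <-> germ_rel p q
}.

Definition germ_of (s : S) (phi : character) (a : arrow) : Prop :=
  arr_set a (s, phi).

End Germs.
Arguments idem {S}.
Arguments U_ {S}.
Arguments germ_of {S}.

Section Topology.
Variable X : Type.

Definition subset (A B : X -> Prop) := forall x, A x -> B x.
Definition set_eq (A B : X -> Prop) := forall x, A x <-> B x.

Inductive gen_open (B : (X -> Prop) -> Prop) : (X -> Prop) -> Prop :=
| go_base U : B U -> gen_open B U
| go_top : gen_open B (fun _ => True)
| go_inter U V : gen_open B U -> gen_open B V ->
    gen_open B (fun x => U x /\ V x)
| go_union (F : (X -> Prop) -> Prop) :
    (forall U, F U -> gen_open B U) ->
    gen_open B (fun x => exists U, F U /\ U x).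

Variable opens : (X -> Prop) -> Prop.

Definition is_closed (C : X -> Prop) : Prop := opens (fun x => ~ C x).

Definition closure (A : X -> Prop) : X -> Prop :=
  fun x => forall C, is_closed C -> subset A C -> C x.

Definition irreducible (A : X -> Prop) : Prop :=
  is_closed A /\
  forall A1 A2, is_closed A1 -> is_closed A2 ->
    set_eq A (fun x => A1 x \/ A2 x) -> set_eq A1 A \/ set_eq A2 A.

Definition sober : Prop :=
  forall A, is_closed A -> (exists x, A x) -> irreducible A ->
    exists x, set_eq (closure (fun y => y = x)) A /\
      forall x', set_eq (closure (fun y => y = x')) A -> x' = x.

Definition quasi_compact (K : X -> Prop) : Prop :=
  forall F : (X -> Prop) -> Prop,
    (forall U, F U -> opens U) ->
    subset K (fun x => exists U, F U /\ U x) ->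
    exists l : list (X -> Prop),
      (forall U, In U l -> F U) /\
      subset K (fun x => exists U, In U l /\ U x).

Definition locally_quasi_compact : Prop :=
  forall x U, opens U -> U x ->
    exists V K, opens V /\ V x /\ subset V K /\ subset K U /\ quasi_compact K.

End Topology.

Definition hatE_opens (S : InvSemigroup0) : (character S -> Prop) -> Prop :=
  gen_open (fun U => exists e : S, idem e /\ U = U_ e).

Arguments hatE_opens S : clear implicits.

Definition arrow_opens (S : InvSemigroup0) : (arrow S -> Prop) -> Prop :=
  gen_open (fun W => exists (s : S) (U : character S -> Prop),
    hatE_opens S U /\ subset U (U_ (mul S (star S s) s)) /\
    W = (fun a => exists phi, U phi /\ germ_of s phi a)).
Arguments arrow_opens S : clear implicits.

(* Main.v *)
Require Import Defs.
From Stdlib Require Import List Classical FunctionalExtensionality PropExtensionality ProofIrrelevance.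

Section Aux.
Variable S : InvSemigroup0.
Local Notation m := (mul S).

Lemma idem_one : idem (one S).
Proof. unfold idem. apply mul1s. Qed.

Lemma idem_mul (e f : S) : idem e -> idem f -> idem (m e f).
Proof.
  unfold idem; intros He Hf.
  rewrite <- mulA, (mulA S f e f), <- (idem_comm S He Hf), <- (mulA S e f f), Hf,
    mulA, He. reflexivity.
Qed.

Lemma idem_ss (s : S) : idem (m (star S s) s).
Proof.
  unfold idem. rewrite mulA. rewrite (mul_star_r S s). reflexivity.
Qed.

Lemma ch_idem (phi : character S) e : phi e -> idem e.
Proof. destruct (chf_char phi) as [H _]. apply H. Qed.
Lemma ch_zero (phi : character S) : ~ phi (zero S).
Proof. destruct (chf_char phi) as [_ [H _]]. exact H. Qed.
Lemma ch_one (phi : character S) : phi (one S).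
Proof. destruct (chf_char phi) as [_ [_ [H _]]]. exact H. Qed.
Lemma ch_mul (phi : character S) e f : idem e -> idem f ->
  (phi (m e f) <-> phi e /\ phi f).
Proof. destruct (chf_char phi) as [_ [_ [_ H]]]. apply H. Qed.

Lemma ch_mul_i (phi : character S) e f : phi e -> phi f -> phi (m e f).
Proof. intros. apply ch_mul; eauto using ch_idem. Qed.

Lemma germ_refl (p : S * character S) : in_dom p -> germ_rel p p.
Proof.
  intros H. repeat split; auto. exists (one S). split; [apply idem_one|].
  split; [apply ch_one | reflexivity].
Qed.

Lemma germ_sym (p q : S * character S) : germ_rel p q -> germ_rel q p.
Proof.
  intros [H1 [H2 [H3 [e [He [He1 He2]]]]]].
  repeat split; auto. exists e. rewrite <- H3. auto.
Qed.

Lemma germ_trans (p q r : S * character S) : germ_rel p q -> germ_rel q r -> germ_rel p r.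
Proof.
  destruct p as [s phi], q as [t psi], r as [u chi]. simpl.
  intros [H1 [H2 [H3 [e [He [He1 He2]]]]]] [K1 [K2 [K3 [f [Hf [Hf1 Hf2]]]]]].
  simpl in *. split; [exact H1|]. split; [exact K2|]. split; [simpl in H3, K3 |- *; congruence|].
  exists (m e f). split; [apply idem_mul; auto|]. split.
  - simpl in H3, He1, Hf1 |- *. subst psi. apply ch_mul_i; auto.
  - simpl in *. rewrite (mulA S s e f), He2, <- (mulA S t e f), (idem_comm S He Hf),
      (mulA S t f e), Hf2, <- mulA, <- (idem_comm S He Hf). reflexivity.
Qed.

Lemma germ_of_rel s phi t psi (a : arrow S) :
  germ_of s phi a -> germ_of t psi a -> germ_rel (s, phi) (t, psi).
Proof.
  unfold germ_of. destruct (arr_cls a) as [p [Hp Hq]].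
  intros A B. apply Hq in A. apply Hq in B.
  eapply germ_trans; [apply germ_sym; exact A | exact B].
Qed.

Lemma germ_of_char s phi t psi (a : arrow S) :
  germ_of s phi a -> germ_of t psi a -> phi = psi.
Proof. intros A B. destruct (germ_of_rel _ _ _ _ _ A B) as [_ [_ [H _]]]. exact H. Qed.

Lemma germ_of_move s phi (q : S * character S) (a : arrow S) :
  germ_of s phi a -> germ_rel (s, phi) q -> arr_set a q.
Proof.
  unfold germ_of. destruct (arr_cls a) as [p [Hp Hq]].
  intros A B. apply Hq. apply Hq in A. eapply germ_trans; eauto.
Qed.

Lemma germ_of_dom s phi (a : arrow S) : germ_of s phi a -> phi (m (star S s) s).
Proof.
  unfold germ_of. destruct (arr_cls a) as [p [Hp Hq]]. intros A.
  apply Hq in A. destruct A as [_ [A _]]. exact A.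
Qed.

Lemma arrow_eq s phi (a b : arrow S) : germ_of s phi a -> germ_of s phi b -> a = b.
Proof.
  intros A B.
  assert (E : arr_set a = arr_set b).
  { apply functional_extensionality; intro q. apply propositional_extensionality.
    split; intro H.
    - eapply germ_of_move; [exact B|]. unfold germ_of in A.
      destruct (arr_cls a) as [p [Hp Hq]].
      apply Hq in A. apply Hq in H. eapply germ_trans; [apply germ_sym; exact A|exact H].
    - eapply germ_of_move; [exact A|]. unfold germ_of in B.
      destruct (arr_cls b) as [p [Hp Hq]].
      apply Hq in B. apply Hq in H. eapply germ_trans; [apply germ_sym; exact B|exact H]. }
  destruct a as [sa ca], b as [sb cb]. simpl in E. subst sb.
  f_equal. apply proof_irrelevance.
Qed.

Lemma char_eq (phi psi : character S) : (forall e, phi e <-> psi e) -> phi = psi.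
Proof.
  intros H. destruct phi as [f Hf], psi as [g Hg]. simpl in H.
  assert (f = g) by (apply functional_extensionality; intro; apply propositional_extensionality; auto).
  subst g. f_equal. apply proof_irrelevance.
Qed.

Definition mk_arrow (s : S) (phi : character S) (H : phi (m (star S s) s)) : arrow S :=
  {| arr_set := germ_rel (s, phi);
     arr_cls := ex_intro _ (s, phi) (conj H (fun q => iff_refl _)) |}.

Lemma mk_arrow_germ s phi H : germ_of s phi (@mk_arrow s phi H).
Proof. unfold germ_of, mk_arrow. simpl. apply germ_refl. exact H. Qed.

End Aux.

Lemma gen_open_ext X (B : (X -> Prop) -> Prop) U V :
  set_eq U V -> gen_open B U -> gen_open B V.
Proof.
  intros H HU. assert (U = V) by (apply functional_extensionality; intro;
    apply propositional_extensionality; apply H). subst; auto.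
Qed.

Section Main.
Variable S : InvSemigroup0.
Local Notation m := (mul S).

Lemma hat_nbhd (U : character S -> Prop) : hatE_opens S U ->
  forall phi, U phi -> exists e, idem e /\ phi e /\ forall psi : character S, psi e -> U psi.
Proof.
  unfold hatE_opens. induction 1; intros phi Hphi.
  - destruct H as [e [He ->]]. exists e. split; auto.
  - exists (one S). split; [apply idem_one|]. split; [apply ch_one|]. auto.
  - destruct Hphi as [H1 H2]. destruct (IHgen_open1 _ H1) as [e [He [He1 He2]]].
    destruct (IHgen_open2 _ H2) as [f [Hf [Hf1 Hf2]]].
    exists (m e f). split; [apply idem_mul; auto|]. split; [apply ch_mul_i; auto|].
    intros psi Hp. apply ch_mul in Hp; auto. destruct Hp. split; auto.
  - destruct Hphi as [V [HV HVp]]. destruct (H0 V HV phi HVp) as [e [He [He1 He2]]].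
    exists e. split; auto. split; auto. intros psi Hp. exists V. auto.
Qed.

Lemma LB (O : arrow S -> Prop) : arrow_opens S O ->
  forall s phi a, germ_of s phi a -> O a ->
  exists e, idem e /\ phi e /\
    forall (phi' : character S) b, phi' e -> germ_of s phi' b -> O b.
Proof.
  unfold arrow_opens. induction 1; intros s phi a Ha HO.
  - destruct H as [t [U0 [HU [HsU ->]]]].
    destruct HO as [psi [Upsi Gpsi]].
    destruct (germ_of_rel _ _ _ _ _ _ Ha Gpsi) as [D1 [D2 [Eq [f [Hf [Hf1 Hf2]]]]]].
    simpl in Eq, Hf1, Hf2. subst psi.
    destruct (hat_nbhd _ HU _ Upsi) as [e [He [He1 He2]]].
    exists (m e f). split; [apply idem_mul; auto|]. split; [apply ch_mul_i; auto|].
    intros phi' b Hp Gb. apply ch_mul in Hp; auto. destruct Hp as [Hpe Hpf].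
    exists phi'. split; [apply He2; auto|].
    eapply germ_of_move; [exact Gb|].
    split; [eapply germ_of_dom; eauto|]. split; [apply HsU; apply He2; auto|].
    split; [reflexivity|]. exists f. simpl. auto.
  - exists (one S). split; [apply idem_one|]. split; [apply ch_one|]. auto.
  - destruct HO as [H1 H2]. destruct (IHgen_open1 _ _ _ Ha H1) as [e [He [He1 He2]]].
    destruct (IHgen_open2 _ _ _ Ha H2) as [f [Hf [Hf1 Hf2]]].
    exists (m e f). split; [apply idem_mul; auto|]. split; [apply ch_mul_i; auto|].
    intros phi' b Hp Gb. apply ch_mul in Hp; auto. destruct Hp. split; eauto.
  - destruct HO as [V [HV HVp]]. destruct (H0 V HV _ _ _ Ha HVp) as [e [He [He1 He2]]].
    exists e. split; auto. split; auto. intros phi' b Hp Gb. exists V. eauto.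
Qed.

Definition Oe (s e : S) : arrow S -> Prop :=
  fun a => exists phi : character S,
    (U_ e phi /\ U_ (m (star S s) s) phi) /\ germ_of s phi a.

Lemma Oe_open s e : idem e -> arrow_opens S (Oe s e).
Proof.
  intros He. apply go_base. exists s, (fun phi => U_ e phi /\ U_ (m (star S s) s) phi).
  split; [|split; [intros phi [_ H]; exact H | reflexivity]].
  apply go_inter; apply go_base; [exists e | exists (m (star S s) s)]; split; auto.
  apply idem_ss.
Qed.

Lemma irr_meet (A O1 O2 : arrow S -> Prop) :
  irreducible (arrow_opens S) A -> arrow_opens S O1 -> arrow_opens S O2 ->
  (exists x, A x /\ O1 x) -> (exists x, A x /\ O2 x) ->
  exists x, A x /\ O1 x /\ O2 x.
Proof.
  intros [HA Hirr] H1 H2 [x1 [Ax1 O1x1]] [x2 [Ax2 O2x2]].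
  apply NNPP; intro Hno.
  assert (Cl : forall O, arrow_opens S O -> is_closed (arrow_opens S) (fun x => A x /\ ~ O x)).
  { intros O HO. unfold is_closed.
    eapply gen_open_ext; [|apply (@go_union _ _ (fun V => V = (fun x => ~ A x) \/ V = O))].
    - intro x. split.
      + intros [V [[-> | ->] HV]]; tauto.
      + intro H. destruct (classic (A x)) as [Ax|nAx].
        * exists O. split; [auto|]. apply NNPP. tauto.
        * exists (fun x => ~ A x). auto.
    - intros V [-> | ->]; [exact HA | exact HO]. }
  destruct (Hirr _ _ (Cl _ H1) (Cl _ H2)) as [E|E].
  - intro x. split.
    + intro Ax. destruct (classic (O1 x)); destruct (classic (O2 x)); firstorder.
    + tauto.
  - apply E in Ax1. tauto.
  - apply E in Ax2. tauto.
Qed.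

Lemma spec_open (x x' : arrow S) O :
  closure (arrow_opens S) (fun y => y = x') x -> arrow_opens S O -> O x -> O x'.
Proof.
  intros Hc HO Ox. apply NNPP; intro nO.
  assert (Cc : is_closed (arrow_opens S) (fun z => ~ O z)).
  { unfold is_closed. eapply gen_open_ext; [|exact HO]. intro z. split; [tauto|apply NNPP]. }
  apply (Hc _ Cc); auto. intros z ->. exact nO.
Qed.

Lemma rep (a : arrow S) : exists s phi, germ_of s phi a.
Proof.
  destruct (arr_cls a) as [[s phi] [Hp Hq]]. exists s, phi. unfold germ_of.
  apply Hq. apply germ_refl. exact Hp.
Qed.

End Main.

Theorem lemma3p3 (S : InvSemigroup0) :
  locally_quasi_compact (arrow_opens S) /\ sober (arrow_opens S).
Proof.
  split.
  -
    intros x U HU Ux.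
    destruct (rep _ x) as [s [phi Gx]].
    destruct (LB _ _ HU _ _ _ Gx Ux) as [e [He [He1 He2]]].
    pose (ss := mul S (star S s) s).
    pose (g := mul S e ss).
    assert (Hss : idem ss) by apply idem_ss.
    assert (Hg : idem g) by (apply idem_mul; auto).
    assert (phig : phi g) by (apply ch_mul_i; auto; eapply germ_of_dom; eauto).
    exists (Oe S s e), (Oe S s e). split; [apply Oe_open; auto|].
    split; [exists phi; split; [split; [auto|eapply germ_of_dom; eauto]|auto]|].
    split; [intros z Hz; exact Hz|]. split.
    { intros b [phi' [[Hp1 _] Gb]]. eapply He2; eauto. }
    intros F HF Hcov.
    assert (Hchi : is_character S (fun f => idem f /\ mul S g f = g)).
    { split; [intros f [Hf _]; exact Hf|]. split.
      { intros [_ H0]. rewrite muls0 in H0. rewrite <- H0 in phig. exact (ch_zero _ _ phig). }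
      split; [split; [apply idem_one| apply muls1]|].
      intros a b Ha Hb. split.
      - intros [_ H]. assert (Hga : mul S g a = g).
        { rewrite <- H at 1. rewrite <- (mulA S g (mul S a b) a), <- (mulA S a b a),
            (idem_comm S Hb Ha), (mulA S a a b), Ha. exact H. }
        split; split; auto.
        rewrite <- Hga at 1. rewrite <- (mulA S g a b). exact H.
      - intros [[_ Ha'] [_ Hb']]. split; [apply idem_mul; auto|].
        rewrite mulA, Ha'. exact Hb'. }
    pose (chi := Build_character Hchi).
    assert (chig : chi g) by (split; auto).
    assert (chie : chi e /\ chi ss) by (apply (ch_mul _ chi); auto).
    destruct chie as [chie chiss].
    pose (y := mk_arrow S s chi chiss).
    assert (Ky : Oe S s e y) by (exists chi; split; [split; auto | apply mk_arrow_germ]).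
    destruct (Hcov y Ky) as [U' [FU' U'y]].
    destruct (LB _ _ (HF _ FU') _ _ _ (mk_arrow_germ _ _ _ chiss) U'y) as [f [Hf [Hf1 Hf2]]].
    exists (U' :: nil). split.
    + intros V [<- | []]. exact FU'.
    + intros b [phi' [[Hp1 Hp2] Gb]]. exists U'. split; [left; reflexivity|].
      apply (Hf2 phi'); auto.
      assert (pg : phi' g) by (apply ch_mul_i; auto).
      destruct Hf1 as [_ Hgf].
      rewrite <- Hgf in pg. apply ch_mul in pg; auto. tauto.
  -
    intros A HA [x0 Ax0] Hirr.
    destruct (rep _ x0) as [s [phi0 G0]].
    pose (ss := mul S (star S s) s).
    assert (Hss : idem ss) by apply idem_ss.
    pose (Fp := fun e => idem e /\ exists a (phi : character S), A a /\ phi e /\ germ_of s phi a).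
    assert (Hchar : is_character S Fp).
    { split; [intros e [He _]; exact He|]. split.
      { intros [_ [a [phi [_ [H _]]]]]. exact (ch_zero _ _ H). }
      split; [split; [apply idem_one| exists x0, phi0; split; [auto|split; [apply ch_one|auto]]]|].
      intros e f He Hf. split.
      - intros [_ [a [phi [Aa [Hp Ga]]]]]. apply ch_mul in Hp; auto. destruct Hp.
        split; split; auto; exists a, phi; auto.
      - intros [[_ [a [phi [Aa [Hp Ga]]]]] [_ [b [psi [Ab [Hq Gb]]]]]].
        destruct (irr_meet _ A (Oe S s e) (Oe S s f) Hirr (Oe_open _ _ _ He) (Oe_open _ _ _ Hf))
          as [c [Ac [[p1 [[Hp1 _] Gc1]] [p2 [[Hp2 _] Gc2]]]]].
        + exists a. split; auto. exists phi. split; [split; auto; eapply germ_of_dom; eauto|auto].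
        + exists b. split; auto. exists psi. split; [split; auto; eapply germ_of_dom; eauto|auto].
        + assert (p1 = p2) by (eapply germ_of_char; eauto). subst p2.
          split; [apply idem_mul; auto|]. exists c, p1. split; auto. split; auto.
          apply ch_mul_i; auto. }
    pose (psi := Build_character Hchar).
    assert (psiss : psi ss).
    { split; auto. exists x0, phi0. split; auto. split; auto. eapply germ_of_dom; eauto. }
    pose (x := mk_arrow S s psi psiss).
    assert (Gx : germ_of s psi x) by apply mk_arrow_germ.
    assert (Ax : A x).
    { apply NNPP; intro nAx.
      destruct (LB _ _ HA _ _ _ Gx nAx) as [e [He [He1 He2]]].
      destruct He1 as [_ [a [phi [Aa [Hp Ga]]]]]. exact (He2 _ _ Hp Ga Aa). }
    assert (Hcl : set_eq (closure (arrow_opens S) (fun y => y = x)) A).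
    { intro y. split.
      - intro H. apply H; [exact HA|]. intros z ->. exact Ax.
      - intros Ay C HC Hsub. apply NNPP; intro nCy.
        destruct (irr_meet _ A (fun z => ~ C z) (Oe S s (one S)) Hirr HC
          (Oe_open _ _ _ (idem_one _))) as [c [Ac [nCc [p [_ Gc]]]]].
        + exists y. auto.
        + exists x. split; auto. exists psi. split; [split; [apply ch_one|auto]|auto].
        + destruct (LB _ _ HC _ _ _ Gc nCc) as [e [He [He1 He2]]].
          assert (psie : psi e) by (split; auto; exists c, p; auto).
          apply (He2 _ _ psie Gx). apply Hsub. reflexivity. }
    exists x. split; [exact Hcl|].
    intros x' Hcl'.
    assert (Ax' : A x') by (apply (proj1 (Hcl' x')); unfold closure; intros C _ H; apply H; reflexivity).
    assert (c1 : closure (arrow_opens S) (fun y => y = x) x') by (apply (proj2 (Hcl x')); exact Ax').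
    assert (c2 : closure (arrow_opens S) (fun y => y = x') x) by (apply (proj2 (Hcl' x)); exact Ax).
    assert (O1 : Oe S s (one S) x) by (exists psi; split; [split; [apply ch_one|auto]|auto]).
    destruct (spec_open _ _ _ _ c2 (Oe_open _ _ _ (idem_one _)) O1) as [chi [_ Gx']].
    assert (E : chi = psi).
    { apply char_eq. intro e. split.
      - intro ce. assert (Hie : idem e) by (eapply ch_idem; eauto).
        assert (Ox' : Oe S s e x') by (exists chi; split; [split; [auto|eapply germ_of_dom; eauto]|auto]).
        destruct (spec_open _ _ _ _ c1 (Oe_open _ _ _ Hie) Ox') as [p [[pe _] Gp]].
        assert (p = psi) by (eapply germ_of_char; eauto). subst p. exact pe.
      - intro pe. assert (Hie : idem e) by (eapply ch_idem; eauto).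
        assert (Ox : Oe S s e x) by (exists psi; split; [split; auto|auto]).
        destruct (spec_open _ _ _ _ c2 (Oe_open _ _ _ Hie) Ox) as [p [[pe' _] Gp]].
        assert (p = chi) by (eapply germ_of_char; eauto). subst p. exact pe'. }
    subst chi. eapply arrow_eq; eauto.
Qed.
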